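(* For all integers $n\ge 4$, $m\ge 2$ and $k\in\{2,\ldots,n-2\}$, $$\chi_{\mu_k}(P_n\boxtimes K_m)=\begin{cases}2\lfloor\frac{n}{k+2}\rfloor & \text{if } n\equiv 0 \pmod{k+2},\\ 2\lfloor\frac{n}{k+2}\rfloor+1 & \text{if } n\equiv 1,2 \pmod{k+2},\\ 2\lfloor\frac{n}{k+2}\rfloor+2 & \text{otherwise.}\end{cases}$$
   Context: $P_n$ is the path on $n$ vertices and $K_m$ the complete graph. The strong product $G\boxtimes H$ has vertex set $V(G)\times V(H)$, with distinct $(g,h),(g',h')$ adjacent iff ($g=g'$ or $gg'\in E(G)$) and ($h=h'$ or $hh'\in E(H)$). For a positive integer $k$, a set $M\subseteq V(X)$ is a $k$-distance mutual-visibility set if for every two vertices $u,v\in M$ there exists a shortest $u,v$-path of length at most $k$ none of whose internal vertices lies in $M$. $\chi_{\mu_k}(X)$ is the minimum cardinality of a partition of $V(X)$ into $k$-distance mutual-visibility sets. *)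

(* Defs.v *)
From mathcomp Require Import all_boot.
Set Implicit Arguments. Unset Strict Implicit. Unset Printing Implicit Defensive.

Definition path_adj (n : nat) : rel 'I_n :=
  fun i j => (i.+1 == j :> nat) || (j.+1 == i :> nat).

Definition complete_adj (m : nat) : rel 'I_m := fun i j => i != j.

Definition strong_adj (T1 T2 : finType) (e1 : rel T1) (e2 : rel T2)
  : rel (T1 * T2) :=
  fun x y => [&& x != y, (x.1 == y.1) || e1 x.1 y.1 & (x.2 == y.2) || e2 x.2 y.2].

(* A u,v-walk is a sequence p with path e u p and last u p = v; its length is
   size p.  A shortest u,v-path is a u,v-walk of minimal length. *)
Definition is_walk (T : finType) (e : rel T) (u v : T) (p : seq T) : Prop :=
  path e u p /\ last u p = v.

Definition is_shortest_path (T : finType) (e : rel T) (u v : T) (p : seq T) : Prop :=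
  is_walk e u v p /\ (forall q, is_walk e u v q -> size p <= size q).

Definition internal (T : Type) (p : seq T) : seq T := take (size p).-1 p.

Definition kdist_mv_set (T : finType) (e : rel T) (k : nat) (M : {set T}) : Prop :=
  forall u v, u \in M -> v \in M -> u != v ->
    exists p, [/\ is_shortest_path e u v p, size p <= k &
                  all (fun x => x \notin M) (internal p)].

Definition kdist_mv_partition (T : finType) (e : rel T) (k : nat)
  (P : {set {set T}}) : Prop :=
  partition P [set: T] /\ forall B, B \in P -> kdist_mv_set e k B.

Definition is_chi_mu (T : finType) (e : rel T) (k c : nat) : Prop :=
  (exists P, kdist_mv_partition e k P /\ #|P| = c) /\
  (forall P, kdist_mv_partition e k P -> c <= #|P|).

Definition PK_adj (n m : nat) : rel ('I_n * 'I_m) :=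
  strong_adj (@path_adj n) (@complete_adj m).

Definition chi_formula (n k : nat) : nat :=
  let q := n %/ (k + 2) in
  let r := n %% (k + 2) in
  if r == 0 then 2 * q
  else if (r == 1) || (r == 2) then 2 * q + 1
  else 2 * q + 2.

(* Main.v *)
Require Import Defs.
From mathcomp Require Import all_boot zify.

Lemma fE q r k : r < k + 2 ->
  chi_formula (q * (k + 2) + r) k =
  if r == 0 then 2 * q else if r <= 2 then 2 * q + 1 else 2 * q + 2.
Proof.
move=> hr; rewrite /chi_formula /= !addn2 in hr *.
rewrite divnMDl // modnMDl divn_small // modn_small // ?addn0.
by case: r hr => [|[|[|r]]].
Qed.

Lemma f_step2 n k : chi_formula n k <= chi_formula (n - (k + 2)) k + 2.
Proof.
case: (ltnP n (k + 2)) => hn.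
  have -> : n - (k + 2) = 0 by lia.
  have := fE 0 n k hn; rewrite mul0n add0n => ->.
  have := fE 0 0 k (_ : 0 < k + 2). rewrite mul0n add0n => ->; last lia.
  by case: ifP => _ //; case: ifP.
rewrite (divn_eq n (k + 2)).
have hq : 0 < n %/ (k + 2) by rewrite divn_gt0 // addn2.
have hr : n %% (k + 2) < k + 2 by rewrite ltn_mod addn2.
set q := n %/ (k + 2) in hq *; set r := n %% (k + 2) in hr *.
have -> : q * (k + 2) + r - (k + 2) = q.-1 * (k + 2) + r.
  case: q hq => // q _; rewrite mulSn /=; lia.
rewrite !fE //.
case: q hq => // q _ /=.
by case: ifP => _; [lia | case: ifP => _; lia].
Qed.

Lemma f_step1 n k : 2 <= k -> 1 <= n -> chi_formula n k <= chi_formula (n - 2) k + 1.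
Proof.
move=> hk hn.
rewrite (divn_eq n (k + 2)) in hn *.
have hr' : n %% (k + 2) < k + 2 by rewrite ltn_mod addn2.
move: (n %/ (k + 2)) (n %% (k + 2)) hr' hn => q r hr hn.
case: (leqP 2 r) => h2.
  have -> : q * (k + 2) + r - 2 = q * (k + 2) + (r - 2) by lia.
  rewrite !fE //; last lia.
  case: (r =P 0) => e0; first lia.
  case: (leqP r 2) => e1.
    have -> : r - 2 = 0 by lia. by rewrite eqxx; lia.
  case: (r - 2 =P 0) => e2; first lia.
  case: (leqP (r - 2) 2) => _; lia.
case: q hn => [|q] hn.
  rewrite mul0n add0n in hn *.
  have -> : r - 2 = 0 by lia.
  have := fE 0 r k hr; rewrite mul0n add0n => ->.
  have := fE 0 0 k (_ : 0 < k + 2); rewrite mul0n add0n => ->; last lia.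
  have -> : r = 1 by lia. by [].
have -> : q.+1 * (k + 2) + r - 2 = q * (k + 2) + (k + r) by rewrite mulSn; lia.
rewrite !fE //; last lia.
case: (r =P 0) => e0; case: (k + r =P 0) => e1; try lia;
case: (leqP r 2) => e2; case: (leqP (k + r) 2) => e3; lia.
Qed.

Lemma lb_abstract (T : finType) (lo hi : T -> nat) k : 2 <= k ->
  forall n (A : {set T}),
  (forall j, j < n -> exists2 i, i \in A & lo i <= j <= hi i) ->
  (forall i, i \in A -> hi i <= lo i + k) ->
  (forall i j, i \in A -> lo i < j < hi i -> j.+1 < n ->
     exists i', [/\ i' \in A, i' != i & lo i' <= j <= hi i']) ->
  chi_formula n k <= #|A|.
Proof.
move=> hk n; move: (ltnSn n); move: {2}n.+1 => N; elim: N n => // N IH n ltnN A Hcov Hw Hint.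
have restr : forall n0, n0 <= n ->
   [/\ (forall j, j < n0 -> exists2 i, i \in A :&: [set i | lo i < n0] & lo i <= j <= hi i),
       (forall i, i \in A :&: [set i | lo i < n0] -> hi i <= lo i + k) &
       (forall i j, i \in A :&: [set i | lo i < n0] -> lo i < j < hi i -> j.+1 < n0 ->
     exists i', [/\ i' \in A :&: [set i | lo i < n0], i' != i & lo i' <= j <= hi i'])].
  move=> n0 hn0; split.
  - move=> j hj; have [|i iA /andP[h1 h2]] := Hcov j; first lia.
    by exists i; rewrite ?inE ?iA ?h1 ?h2 //=; lia.
  - by move=> i; rewrite inE => /andP[/Hw].
  - move=> i j; rewrite inE => /andP[iA _] hj hjn.
    have [|i' [i'A ne hh]] := Hint i j iA hj; first lia.
    exists i'; split => //; rewrite inE i'A inE /=; lia.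
case: n ltnN Hcov Hint restr => [|n'] ltnN Hcov Hint restr.
  by rewrite /chi_formula div0n mod0n.
have [I IA /andP[hI1 hI2]] := Hcov n' (ltnSn n').
case: (leqP (n'.+1 - 2) (lo I)) => hlo.
  have [c1 c2 c3] := restr (n'.+1 - 2) (leq_subr _ _).
  have IH1 : chi_formula (n'.+1 - 2) k <= #|A :&: [set i | lo i < n'.+1 - 2]| by apply: IH c1 c2 c3; lia.
  have h1 : 0 < #|A :\: [set i | lo i < n'.+1 - 2]|.
    by apply/card_gt0P; exists I; rewrite !inE IA andbT -leqNgt.
  have := cardsID [set i | lo i < n'.+1 - 2] A.
  have := f_step1 (n'.+1) k hk (ltn0Sn _). lia.
have hj : lo I < n'.-1 < hi I by lia.
have [|J [JA neJ /andP[hJ1 hJ2]]] := Hint I n'.-1 IA hj; first lia.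
have hwJ := Hw J JA; have hwI := Hw I IA.
have [c1 c2 c3] := restr (n'.+1 - (k + 2)) (leq_subr _ _).
have IH1 : chi_formula (n'.+1 - (k + 2)) k <= #|A :&: [set i | lo i < n'.+1 - (k + 2)]| by apply: IH c1 c2 c3; lia.
have h1 : 2 <= #|A :\: [set i | lo i < n'.+1 - (k + 2)]|.
  have e2 : #|[set I; J]| = 2 by rewrite cards2 eq_sym neJ.
  rewrite -{1}e2.
  apply: subset_leq_card; apply/subsetP => x; rewrite !inE => /orP[]/eqP->;
    rewrite ?IA ?JA andbT -leqNgt; lia.
have := cardsID [set i | lo i < n'.+1 - (k + 2)] A.
have := f_step2 (n'.+1) k. lia.
Qed.

Definition Xb (w s a : nat) : bool :=
  (s == 0) || ((2 <= s <= w - 2) && ((s == w - 2) || (a == 0))).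
Definition bitv (w s a : nat) : bool := if w <= 2 then false else ~~ Xb w s a.

Lemma bit_local k w s1 s2 a1 a2 : 2 <= k -> w <= k + 2 -> s1 < s2 -> s2 < w ->
  bitv w s1 a1 = bitv w s2 a2 ->
  s2 - s1 <= k /\
  (forall sx, s1 < sx < s2 -> bitv w sx 0 != bitv w s1 a1 \/ bitv w sx 1 != bitv w s1 a1).
Proof.
move=> hk hw h12 h2w; rewrite /bitv.
case: (leqP w 2) => hw2.
  by move=> _; split; [lia | move=> sx; lia].
case h1: (Xb w s1 a1); case h2: (Xb w s2 a2) => //= _; move: h1 h2; rewrite /Xb.
- move=> h1 h2; split; first lia.
  move=> sx hsx; right; lia.
- move=> h1 h2; split; first lia.
  move=> sx hsx; left; lia.
Qed.

Definition segw (n k i : nat) : nat :=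
  if i %/ (k + 2) < n %/ (k + 2) then k + 2 else n %% (k + 2).
Definition colr (n k i a : nat) : nat :=
  2 * (i %/ (k + 2)) + bitv (segw n k i) (i %% (k + 2)) a.

Lemma div_le_eq i n d : 0 < d -> i < n -> n %/ d <= i %/ d -> i %/ d = n %/ d /\ i %% d < n %% d.
Proof.
move=> hd hin hq.
have h1 : i %/ d <= n %/ d by apply: leq_div2r; lia.
have e : i %/ d = n %/ d by lia.
split => //.
have Ei := divn_eq i d; have En := divn_eq n d.
rewrite e in Ei. move: Ei En; move: (n %/ d * d) => T; lia.
Qed.

Lemma s_lt_w n k i : i < n -> i %% (k + 2) < segw n k i.
Proof.
move=> hin; rewrite /segw; case: ifP => h; first by rewrite ltn_mod addn2.
have [] := div_le_eq i n (k + 2) _ hin _ => //; lia.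
Qed.

Lemma segw_le n k i : segw n k i <= k + 2.
Proof. rewrite /segw; case: ifP => _ //; apply: ltnW; rewrite ltn_mod; lia. Qed.

Lemma colr_lt n k i a : 2 <= k -> i < n -> colr n k i a < chi_formula n k.
Proof.
move=> hk hin.
have E := fE (n %/ (k + 2)) (n %% (k + 2)) k (_ : _ < k + 2).
rewrite -divn_eq in E; rewrite E; last by rewrite ltn_mod; lia.
rewrite /colr /segw.
case: (ltnP (i %/ (k + 2)) (n %/ (k + 2))) => h.
  by case: (n %% (k + 2) == 0); [|case: ifP]; case: (bitv _ _ _) => /=; lia.
have hd : 0 < k + 2 by lia.
have [e1 e2] := div_le_eq i n (k + 2) hd hin h.
rewrite e1 /bitv.
case: (n %% (k + 2) =P 0) => h0; first lia.
case: (leqP (n %% (k + 2)) 2) => h2 /=; first lia.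
case: (Xb _ _ _) => /=; lia.
Qed.

Lemma colr_same n k i j a b : 2 <= k -> i < j -> j < n -> colr n k i a = colr n k j b ->
  j - i <= k /\ (forall x, i < x < j ->
    colr n k x 0 != colr n k i a \/ colr n k x 1 != colr n k i a).
Proof.
move=> hk hij hjn; rewrite /colr.
set d := k + 2.
have hd : 0 < d by rewrite /d; lia.
move=> e.
have ht : i %/ d = j %/ d.
  move: e; case: (bitv _ _ a); case: (bitv _ _ b) => /=; lia.
have hsw : segw n k j = segw n k i by rewrite /segw -/d ht.
rewrite ht hsw in e.
have Ei := divn_eq i d; have Ej := divn_eq j d.
rewrite ht in Ei.
have hs2 := s_lt_w n k j hjn. rewrite hsw in hs2.
have hij' : i %% d < j %% d.
  move: Ei Ej; move: (j %/ d * d) => T; lia.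
have e' : bitv (segw n k i) (i %% d) a = bitv (segw n k i) (j %% d) b.
  by move: e; case: (bitv _ _ a); case: (bitv _ _ b) => /=; lia.
have [L1 L2] := @bit_local k _ _ _ _ _ hk (segw_le n k i) hij' hs2 e'.
split.
  move: Ei Ej L1; move: (j %/ d * d) => T; lia.
move=> x hx.
have hxt : x %/ d = j %/ d.
  have : i %/ d <= x %/ d by apply: leq_div2r; lia.
  have : x %/ d <= j %/ d by apply: leq_div2r; lia.
  lia.
have hswx : segw n k x = segw n k i by rewrite /segw -/d hxt -ht.
have Ex := divn_eq x d. rewrite hxt in Ex.
have hsx : i %% d < x %% d < j %% d.
  by move: Ei Ej Ex hx; move: (j %/ d * d) => T; lia.
have := L2 _ hsx; rewrite hxt hswx ht.
by case=> h; [left|right]; move: h; rewrite eqn_add2l; case: (bitv _ _ _); case: (bitv _ _ _).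
Qed.

Section Graph.
Variables n m : nat.
Local Notation V := ('I_n * 'I_m)%type.
Local Notation e := (@PK_adj n m).

Lemma adj_col (x y : V) : e x y -> y.1 <= x.1 + 1 /\ x.1 <= y.1 + 1.
Proof.
case: x y => [x1 x2] [y1 y2]; rewrite /PK_adj /strong_adj /path_adj /=.
case/and3P=> [_ /orP[/eqP->|/orP[/eqP<-|/eqP<-]] _]; lia.
Qed.

Lemma adj_sym (x y : V) : e x y = e y x.
Proof.
case: x y => [x1 x2] [y1 y2]; rewrite /PK_adj /strong_adj /path_adj /complete_adj /=.
by rewrite (eq_sym (x1, x2)) (eq_sym x1) (eq_sym x2) (orbC (x1.+1 == y1 :> nat)).
Qed.

Lemma adj_step (x y : V) : x.1.+1 = y.1 :> nat -> e x y.
Proof.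
move=> h; rewrite /PK_adj /strong_adj /path_adj /complete_adj.
have -> : x != y by apply/eqP => exy; move: h; rewrite exy; lia.
by rewrite h eqxx orbT /= orbN.
Qed.

Lemma adj_samecol (x y : V) : x.1 = y.1 -> x != y -> e x y.
Proof.
move=> h ne; rewrite /PK_adj /strong_adj /complete_adj ne h eqxx /=.
by rewrite orbN.
Qed.

Lemma walk_len (x : V) p : path e x p ->
  (last x p).1 <= x.1 + size p /\ x.1 <= (last x p).1 + size p.
Proof.
elim: p x => [|y p IH] x /=; first lia.
by move=> /andP[/adj_col h /IH]; lia.
Qed.

Lemma ivt (x : V) p j : path e x p -> x.1 < j < (last x p).1 ->
  exists2 y, y \in internal p & (y.1 : nat) = j.
Proof.
elim: p x => [|y p IH] x /=; first lia.
move=> /andP[hxy hp] hj; have hc := @adj_col _ _ hxy.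
case: p IH hp hj => [|z p] IH hp hj; first by move: hj => /=; lia.
case: (y.1 =P j :> nat) => hyj.
  by exists y; rewrite // /internal /= inE eqxx.
have [|w hw hwj] := IH y hp; first lia.
exists w => //; move: hw; rewrite /internal /= !inE => ->; by rewrite orbT.
Qed.

Lemma internal_rcons (T : Type) (s : seq T) x : internal (rcons s x) = s.
Proof. by rewrite /internal size_rcons /= -cats1 take_size_cat. Qed.

Lemma rev_walk (u v : V) p : is_walk e u v p ->
  is_walk e v u (rev (belast u p)) /\ size (rev (belast u p)) = size p.
Proof.
move=> [hp hl]; split; last by rewrite size_rev size_belast.
have H : (fun z => e^~ z) =2 e by move=> a b /=; rewrite adj_sym.
split; first by rewrite -hl rev_path (eq_path H).
by case: p hp hl => [|y p] /= hp hl; [rewrite hl | rewrite rev_cons last_rcons].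
Qed.

Lemma rev_internal (u : V) p (M : {set V}) :
  all (fun x => x \notin M) (internal (rev (belast u p))) =
  all (fun x => x \notin M) (internal p).
Proof.
case/lastP: p => [|p y] //.
by rewrite belast_rcons rev_cons internal_rcons internal_rcons all_rev.
Qed.

Lemma rev_ok (u v : V) p (M : {set V}) k :
  [/\ is_shortest_path e u v p, size p <= k & all (fun x => x \notin M) (internal p)] ->
  exists p', [/\ is_shortest_path e v u p', size p' <= k &
                 all (fun x => x \notin M) (internal p')].
Proof.
case=> [[hw hmin] hk hall]; exists (rev (belast u p)).
have [hw' hs] := @rev_walk u v p hw.
split => //; last by rewrite rev_internal.
  split => // q hq; have [hq' hs'] := @rev_walk v u q hq.
  by rewrite hs -hs'; apply: hmin.
by rewrite hs.
Qed.

Lemma build_path (rowf : nat -> 'I_m) (z : 'I_n) len : forall x : V, x.1 + len < n ->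
  path e x [seq (insubd z y, rowf y) | y <- iota x.1.+1 len] /\
  (last x [seq (insubd z y, rowf y) | y <- iota x.1.+1 len]).1 = x.1 + len :> nat.
Proof.
elim: len => [|len IH] x hx /=; first by rewrite addn0.
set y : V := (insubd z x.1.+1, rowf x.1.+1).
have hy : (y.1 : nat) = x.1.+1 by rewrite /= val_insubd ifT //; lia.
have [|IH1 IH2] := IH y; first by rewrite hy; lia.
rewrite -hy; split; first by rewrite IH1 andbT; apply: adj_step.
by rewrite IH2 hy; lia.
Qed.

End Graph.

Lemma ar1 a n M1 : n.-1 - a <= M1 -> a < n -> n.-1 - M1 <= a.
Proof. lia. Qed.
Lemma ar2 a n : a < n -> a = n.-1 - (n.-1 - a).
Proof. lia. Qed.

Lemma lower_bound n m k (P : {set {set 'I_n * 'I_m}}) : 2 <= k -> 0 < m ->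
  kdist_mv_partition (@PK_adj n m) k P -> chi_formula n k <= #|P|.
Proof.
move=> hk hm [hpart hvis].
case/and3P: hpart => /eqP hcov htriv h0.
pose hi (B : {set 'I_n * 'I_m}) := \max_(x in B) (x.1 : nat).
pose lo (B : {set 'I_n * 'I_m}) := n.-1 - \max_(x in B) (n.-1 - x.1).
have hB : forall B, B \in P ->
   [/\ forall x, x \in B -> lo B <= x.1 <= hi B,
       exists2 x, x \in B & (x.1 : nat) = lo B &
       exists2 x, x \in B & (x.1 : nat) = hi B].
  move=> B BP.
  have : B != set0 by apply: contraNneq h0 => <-.
  case/set0Pn => x0 x0B.
  have cB : 0 < #|B| by apply/card_gt0P; exists x0.
  split.
  - move=> x xB.
    have h1 : (x.1 : nat) <= hi B.
      exact: (@leq_bigmax_cond _ (fun y => y \in B) (fun y : 'I_n * 'I_m => (y.1 : nat)) x xB).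
    have h2 : n.-1 - x.1 <= \max_(y in B) (n.-1 - y.1).
      exact: (@leq_bigmax_cond _ (fun y => y \in B) (fun y : 'I_n * 'I_m => n.-1 - y.1) x xB).
    by rewrite h1 andbT; apply: ar1 h2 (ltn_ord _).
  - have [x xB ex] := eq_bigmax_cond (fun x : 'I_n * 'I_m => n.-1 - x.1) cB.
    by exists x => //; rewrite /lo ex; apply: ar2 (ltn_ord _).
  - have [x xB ex] := eq_bigmax_cond (fun x : 'I_n * 'I_m => (x.1 : nat)) cB.
    by exists x.
apply: (@lb_abstract _ lo hi k hk).
- move=> j hj.
  pose x : 'I_n * 'I_m := (Ordinal hj, Ordinal hm).
  have xc : x \in cover P by rewrite hcov inE.
  exists (pblock P x); first exact: pblock_mem.
  have [h _ _] := hB _ (pblock_mem xc).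
  by have := h x; rewrite mem_pblock xc => /(_ isT).
- move=> B BP; have [h [xl xlB exl] [xh xhB exh]] := hB B BP.
  case: (xl =P xh) => exx.
    by rewrite -exl -exh exx leq_addr.
  have [p [[[hp hlast] _] hsz _]] := hvis B BP xl xh xlB xhB (introN eqP exx).
  case: (@walk_len n m xl p hp) => h1 _; rewrite hlast in h1.
  by rewrite -exl -exh; apply: (leq_trans h1); rewrite leq_add2l.
- move=> B j BP hj hjn.
  have [h [xl xlB exl] [xh xhB exh]] := hB B BP.
  have hjn' : j < n by have := ltn_ord xh.1; lia.
  case: (boolP [forall a : 'I_m, (Ordinal hjn', a) \in B]) => hall.
    exfalso.
    have nex : xl != xh by apply/eqP => exx; move: hj; rewrite -exl -exh exx; lia.
    have [p [[[hp hlast] _] hsz hint]] := hvis B BP xl xh xlB xhB nex.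
    have [|y yi yj] := @ivt n m xl p j hp; first by rewrite hlast exl exh.
    have yB : y \in B.
      have -> : y = (Ordinal hjn', y.2).
        by case: y yi yj => y1 y2 /= _ yj; congr pair; apply: val_inj.
      exact: (forallP hall).
    by have := (allP hint) y yi; rewrite yB.
  case/forallPn: hall => a ha.
  pose x : 'I_n * 'I_m := (Ordinal hjn', a).
  have xc : x \in cover P by rewrite hcov inE.
  exists (pblock P x); split; first exact: pblock_mem.
    apply/eqP => eB; move: ha; rewrite -/x -eB mem_pblock xc //.
  have [h' _ _] := hB _ (pblock_mem xc).
  by have := h' x; rewrite mem_pblock xc => /(_ isT).
Qed.

Lemma vis_set n m k (f : 'I_n * 'I_m -> nat) (M : {set 'I_n * 'I_m}) :
  1 <= k ->
  (forall y z, y \in M -> (z \in M) = (f z == f y)) ->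
  (forall u v : 'I_n * 'I_m, f u = f v -> u.1 < v.1 ->
     v.1 - u.1 <= k /\ forall x, u.1 < x < v.1 ->
       exists b : 'I_m, forall c : 'I_n, (c : nat) = x -> f (c, b) != f u) ->
  kdist_mv_set (@PK_adj n m) k M.
Proof.
move=> hk hM H.
have one : forall u v, u \in M -> v \in M -> u.1 < v.1 ->
    exists p, [/\ is_shortest_path (@PK_adj n m) u v p, size p <= k &
                  all (fun x => x \notin M) (internal p)].
  move=> u v uM vM hlt.
  have fuv : f u = f v by apply/eqP; rewrite eq_sym -(hM u).
  have [hk' hx] := H u v fuv hlt.
  pose rowf (x : nat) : 'I_m :=
    odflt u.2 [pick b | [forall c : 'I_n, ((c : nat) == x) ==> (f (c, b) != f u)]].
  have hrow : forall x, u.1 < x < v.1 -> forall c : 'I_n, (c : nat) = x -> f (c, rowf x) != f u.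
    move=> x hx' c hc; rewrite /rowf; case: pickP => [b /forallP/(_ c)/implyP hb /= | hnone].
      by apply: hb; apply/eqP.
    exfalso; have [b hb] := hx x hx'; move: (hnone b).
    suff -> : [forall c0 : 'I_n, (c0 == x :> nat) ==> (f (c0, b) != f u)] by [].
    by apply/forallP => c'; apply/implyP => /eqP; apply: hb.
  pose len := v.1 - u.1 - 1.
  have [|hp hl] := @build_path n m rowf u.1 len u; first by rewrite /len; move: (ltn_ord v.1) hlt; move: (nat_of_ord u.1) (nat_of_ord v.1) => a b; lia.
  exists (rcons [seq (insubd u.1 y, rowf y) | y <- iota u.1.+1 len] v); split.
  - split; first split.
    + by rewrite rcons_path hp; apply: adj_step; rewrite hl /len; move: hlt; move: (nat_of_ord u.1) (nat_of_ord v.1) => a b; lia.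
    + by rewrite last_rcons.
    + move=> q [hq hql]; have := @walk_len n m u q hq; rewrite hql size_rcons size_map size_iota /len; move: hlt; move: (nat_of_ord u.1) (nat_of_ord v.1) (size q) => a b sq; lia.
  - by rewrite size_rcons size_map size_iota /len; move: hlt hk'; move: (nat_of_ord u.1) (nat_of_ord v.1) => a b; lia.
  - rewrite internal_rcons; apply/allP => y /mapP [x hxi ->].
    rewrite mem_iota /len in hxi.
    rewrite (hM u) //; apply: hrow; first by move: hxi; move: (nat_of_ord u.1) (nat_of_ord v.1) => a b; lia.
    rewrite /= val_insubd ifT //; move: (ltn_ord v.1) hxi; move: (nat_of_ord u.1) (nat_of_ord v.1) => a b; lia.
move=> u v uM vM nuv.
case: (ltngtP u.1 v.1) => hc.
- exact: one.
- have [p hp] := one v u vM uM hc.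
  exact: (@rev_ok n m v u p M k hp).
- exists [:: v]; split.
  + split; first split.
    * by rewrite /= andbT; apply: adj_samecol => //; apply: val_inj.
    * by [].
    * move=> q [hq hql]; case: q hq hql => //= hq hql; by move: nuv; rewrite hql eqxx.
  + by [].
  + by [].
Qed.

Theorem proposition5p1 (n m k : nat) :
  4 <= n -> 2 <= m -> 2 <= k -> k <= n - 2 ->
  is_chi_mu (@PK_adj n m) k (chi_formula n k).
Proof.
move=> hn hm hk hkn.
pose f (y : 'I_n * 'I_m) := colr n k y.1 y.2.
pose P := preim_partition f [set: 'I_n * 'I_m].
have m0 : 0 < m by lia.
have m1 : 1 < m by lia.
have hP : kdist_mv_partition (@PK_adj n m) k P.
  split; first exact: preim_partitionP.
  move=> B /imsetP [x0 _ ->]; apply: vis_set; first lia.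
  - by move=> y z; rewrite !inE /= => /eqP ->; rewrite eq_sym.
  - move=> u v fuv hlt.
    have [h1 h2] := @colr_same n k u.1 v.1 u.2 v.2 hk hlt (ltn_ord v.1) fuv.
    split => // x hx.
    case: (h2 x hx) => hne; [exists (Ordinal m0) | exists (Ordinal m1)];
      by move=> c hc; rewrite /f /= hc.
split; last by move=> P' hP'; exact: lower_bound.
exists P; split => //.
apply/eqP; rewrite eqn_leq lower_bound // andbT.
pose F := chi_formula n k.
have sub : P \subset [set [set y in [set: 'I_n * 'I_m] | (c : nat) == f y] | c : 'I_F].
  apply/subsetP => B /imsetP [x0 _ ->]; apply/imsetP.
  by exists (Ordinal (@colr_lt n k x0.1 x0.2 hk (ltn_ord x0.1))).
apply: leq_trans (subset_leq_card sub) _.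
by apply: leq_trans (leq_imset_card _ _) _; rewrite card_ord.
Qed.
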